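(* Let $G\in\mathrm{C}^1(\mathbb{R})$ be coercive and $V\in\mathrm{Lip}(\mathbb{R})$ be $1$-periodic. For all $\theta_1,\theta_2\in\mathbb{R}$ with $\theta_1<\theta_2$, the function $g_{\theta_1,\theta_2}=f_{\theta_2}-f_{\theta_1}$ satisfies $$(\theta_2-\theta_1)e^{-K_1(\theta_1,\theta_2)}\le g_{\theta_1,\theta_2}(x)\le(\theta_2-\theta_1)e^{K_1(\theta_1,\theta_2)}\quad\text{for all }x\in\mathbb{R},$$ where $K_1(\theta_1,\theta_2)=\max\{|G'(p)|:\,\min_{x\in[0,1]}f_{\theta_1}(x)\le p\le\max_{x\in[0,1]}f_{\theta_2}(x)\}$.
   Context: $G$ coercive means $G(p)\to\infty$ as $p\to\pm\infty$. For each $\theta\in\mathbb{R}$, $f_\theta\in\mathrm{C}^1(\mathbb{R})$ denotes the unique $1$-periodic function such that $\int_0^1 f_\theta(x)dx=\theta$ and, for some (unique) constant $\overline{H}(\theta)\in\mathbb{R}$, $f_\theta'(x)+G(f_\theta(x))+V(x)=\overline{H}(\theta)$ for all $x\in\mathbb{R}$. *)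

(* Defs.v *)
From Stdlib Require Import Reals.
From Coquelicot Require Import Coquelicot.
Open Scope R_scope.

Definition is_C1 (f : R -> R) : Prop :=
  (forall x, ex_derive f x) /\ (forall x, continuous (Derive f) x).

Definition periodic1 (f : R -> R) : Prop := forall x, f (x + 1) = f x.

Definition lipschitz (f : R -> R) : Prop :=
  exists L : R, forall x y, Rabs (f x - f y) <= L * Rabs (x - y).

Definition coercive (G : R -> R) : Prop :=
  filterlim G (Rbar_locally p_infty) (Rbar_locally p_infty) /\
  filterlim G (Rbar_locally m_infty) (Rbar_locally p_infty).

Definition is_f_theta (G V : R -> R) (theta : R) (f : R -> R) : Prop :=
  is_C1 f /\ periodic1 f /\ RInt f 0 1 = theta /\
  exists H : R, forall x, Derive f x + G (f x) + V x = H.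

Definition max01 (f : R -> R) : R :=
  real (Lub_Rbar (fun y => exists x, 0 <= x <= 1 /\ y = f x)).
Definition min01 (f : R -> R) : R :=
  real (Glb_Rbar (fun y => exists x, 0 <= x <= 1 /\ y = f x)).

Definition K1 (G f1 f2 : R -> R) : R :=
  real (Lub_Rbar (fun y => exists p, min01 f1 <= p <= max01 f2 /\
                                     y = Rabs (Derive G p))).

(* Main.v *)
Require Import Defs.
From Stdlib Require Import Reals Lra Classical ZArith.
From Coquelicot Require Import Coquelicot.
Open Scope R_scope.

Lemma exp_le_mono a b : a <= b -> exp a <= exp b.
Proof. intros H; destruct (Rle_lt_or_eq_dec _ _ H) as [h|h]; [left; now apply exp_increasing| subst; lra]. Qed.

Lemma per_nat f : periodic1 f -> forall n x, f (x + INR n) = f x.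
Proof.
  intros P n; induction n as [|n IH]; intros x.
  - simpl; now rewrite Rplus_0_r.
  - rewrite S_INR. replace (x + (INR n + 1)) with ((x + INR n) + 1) by ring.
    now rewrite P.
Qed.

Lemma per_Z f : periodic1 f -> forall z x, f (x + IZR z) = f x.
Proof.
  intros P z x. destruct z as [|p|p].
  - now rewrite Rplus_0_r.
  - rewrite <- positive_nat_Z, <- INR_IZR_INZ. apply per_nat; auto.
  - rewrite <- Pos2Z.opp_pos, opp_IZR, <- positive_nat_Z, <- INR_IZR_INZ.
    rewrite <- (per_nat f P (Pos.to_nat p) (x + - INR (Pos.to_nat p))).
    f_equal; ring.
Qed.

Lemma per_red f : periodic1 f -> forall x a, exists t, a <= t <= a + 1 /\ f x = f t.
Proof.
  intros P x a. destruct (archimed (x - a)) as [h1 h2].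
  exists (x + IZR (1 - up (x - a))). split.
  - rewrite minus_IZR. lra.
  - now rewrite per_Z.
Qed.

Lemma cont_of_der (f : R -> R) : (forall x, ex_derive f x) -> forall x, continuity_pt f x.
Proof.
  intros D x. apply continuity_pt_filterlim. exact (@ex_derive_continuous R_AbsRing R_NormedModule f x (D x)).
Qed.

Lemma abs_bound f a b : a <= b -> (forall c, continuity_pt f c) ->
  exists B, forall c, a <= c <= b -> Rabs (f c) <= B.
Proof.
  intros hab C.
  destruct (continuity_ab_maj (comp Rabs f) a b hab) as [M [HM _]].
  { intros c _. apply continuity_pt_comp; auto. apply Rcontinuity_abs. }
  exists (comp Rabs f M). intros c hc. apply (HM c hc).
Qed.

Lemma lub_ge (E : R -> Prop) B : (forall z, E z -> z <= B) ->
  forall z, E z -> z <= real (Lub_Rbar E).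
Proof.
  intros HB z Ez. destruct (Lub_Rbar_correct E) as [ub lub].
  specialize (ub z Ez). specialize (lub (Finite B) (fun w Ew => HB w Ew)).
  destruct (Lub_Rbar E); simpl in *; tauto.
Qed.

Lemma glb_le (E : R -> Prop) B : (forall z, E z -> B <= z) ->
  forall z, E z -> real (Glb_Rbar E) <= z.
Proof.
  intros HB z Ez. destruct (Glb_Rbar_correct E) as [ub lub].
  specialize (ub z Ez). specialize (lub (Finite B) (fun w Ew => HB w Ew)).
  destruct (Glb_Rbar E); simpl in *; tauto.
Qed.

Lemma max01_ge f : (forall x, continuity_pt f x) -> periodic1 f ->
  forall x, f x <= max01 f.
Proof.
  intros C P x. destruct (per_red f P x 0) as [t [ht ->]].
  destruct (continuity_ab_maj f 0 1 ltac:(lra)) as [M [HM _]]; [intros; apply C|].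
  unfold max01. apply (lub_ge _ (f M)).
  - intros z [u [hu ->]]. apply HM; auto.
  - exists t; split; [lra|auto].
Qed.

Lemma min01_le f : (forall x, continuity_pt f x) -> periodic1 f ->
  forall x, min01 f <= f x.
Proof.
  intros C P x. destruct (per_red f P x 0) as [t [ht ->]].
  destruct (continuity_ab_min f 0 1 ltac:(lra)) as [M [HM _]]; [intros; apply C|].
  unfold min01. apply (glb_le _ (f M)).
  - intros z [u [hu ->]]. apply HM; auto.
  - exists t; split; [lra|auto].
Qed.
Lemma mono_neg (h dh : R -> R) x0 y : (forall t, is_derive h t (dh t)) ->
  (forall t, h t < 0 -> 0 <= dh t) -> h x0 < 0 -> y <= x0 -> h y < 0.
Proof.
  intros D S hx0 hy.
  destruct (Rlt_or_le (h y) 0) as [|hy0]; auto. exfalso.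
  assert (yx : y < x0) by (destruct hy as [|e]; auto; subst; lra).
  set (E := fun t => y <= t <= x0 /\ 0 <= h t).
  destruct (completeness E) as [s [ub lub]].
  { exists x0. intros t [ht _]. lra. }
  { exists y. split; [lra|auto]. }
  assert (ys : y <= s) by (apply ub; split; [lra|auto]).
  assert (sx : s <= x0) by (apply lub; intros t [ht _]; lra).
  assert (hs : 0 <= h s).
  { destruct (Rlt_or_le (h s) 0) as [hs|hs]; auto. exfalso.
    assert (C := cont_of_der h (fun t => ex_intro _ _ (D t)) s).
    destruct (C (- h s) ltac:(lra)) as [alp [alp0 Halp]].
    assert (NB : ~ (forall t, E t -> t <= s - alp/2)).
    { intros HB. specialize (lub _ HB). lra. }
    apply not_all_ex_not in NB as [t Ht].
    apply imply_to_and in Ht as [Et Ht]. apply Rnot_le_lt in Ht.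
    assert (ts : t <= s) by (apply ub; auto).
    destruct (Req_dec t s) as [e|ne].
    - subst t. destruct Et; lra.
    - assert (Hd := Halp t). simpl in Hd. unfold R_dist, D_x, no_cond in Hd.
      assert (Ha : (True /\ s <> t) /\ Rabs (t - s) < alp).
      { split; [split; auto|]. rewrite Rabs_left1; lra. }
      specialize (Hd Ha). destruct Et as [_ Et].
      apply Rabs_def2 in Hd. lra. }
  assert (sx' : s < x0) by (destruct sx as [|e]; auto; subst; lra).
  destruct (MVT_cor2 h dh s x0 sx') as [c [Hc hc]].
  { intros c _. apply is_derive_Reals, D. }
  assert (hcn : h c < 0).
  { destruct (Rlt_or_le (h c) 0) as [|hc0]; auto.
    assert (c <= s) by (apply ub; split; [lra|auto]). lra. }
  specialize (S c hcn). nra.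
Qed.
Lemma deriv_h (g g' : R -> R) K t : is_derive g t (g' t) ->
  is_derive (fun t => g t * exp (- K * t)) t ((g' t - K * g t) * exp (- K * t)).
Proof.
  intros Hg.
  assert (He : is_derive (fun t => exp (- K * t)) t (- K * exp (- K * t))).
  { auto_derive; [auto|ring]. }
  replace ((g' t - K * g t) * exp (- K * t)) with
    (plus (mult (g' t) (exp (- K * t))) (mult (g t) (- K * exp (- K * t)))).
  2:{ unfold plus, mult; simpl. ring. }
  apply (is_derive_mult g (fun t => exp (- K * t))); auto.
  intros; apply Rmult_comm.
Qed.

Lemma deriv_refl (g g' : R -> R) t : is_derive g (- t) (g' (- t)) ->
  is_derive (fun t => g (- t)) t (- g' (- t)).
Proof.
  intros Hg.
  assert (Ho : is_derive (fun t : R => - t) t (-1)).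
  { auto_derive; [auto|ring]. }
  pose proof (is_derive_comp g (fun t => - t) t _ _ Hg Ho) as H.
  replace (- g' (- t)) with (scal (-1) (g' (- t))); auto.
  unfold scal; simpl. unfold mult; simpl. ring.
Qed.

Lemma neg_back (g g' : R -> R) K x0 y : (forall t, is_derive g t (g' t)) ->
  (forall t, g t < 0 -> K * g t <= g' t) -> g x0 < 0 -> y <= x0 -> g y < 0.
Proof.
  intros D S h0 hy.
  assert (Hh := mono_neg (fun t => g t * exp (- K * t))
                  (fun t => (g' t - K * g t) * exp (- K * t)) x0 y).
  assert (ep : forall t, 0 < exp (- K * t)) by (intros; apply exp_pos).
  destruct (Rlt_or_le (g y) 0) as [|gy]; auto.
  exfalso. assert (0 <= g y * exp (- K * y)) by (specialize (ep y); nra).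
  enough (g y * exp (- K * y) < 0) by lra.
  apply Hh.
  - intros t; apply deriv_h, D.
  - intros t ht. specialize (ep t).
    assert (g t < 0) by (destruct (Rlt_or_le (g t) 0); auto; nra).
    specialize (S t H0). nra.
  - specialize (ep x0); nra.
  - auto.
Qed.

Lemma neg_fwd (g g' : R -> R) K x0 y : (forall t, is_derive g t (g' t)) ->
  (forall t, g t < 0 -> g' t <= - (K * g t)) -> g x0 < 0 -> x0 <= y -> g y < 0.
Proof.
  intros D S h0 hy.
  replace y with (- - y) by ring.
  apply (neg_back (fun t => g (- t)) (fun t => - g' (- t)) K (- x0) (- y)).
  - intros t; apply deriv_refl, D.
  - intros t ht. specialize (S _ ht). lra.
  - now rewrite Ropp_involutive.
  - lra.
Qed.

Lemma mono_est (g g' : R -> R) K : 0 <= K -> (forall t, is_derive g t (g' t)) ->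
  (forall t, g' t <= K * g t) -> (forall t, 0 <= g t) -> periodic1 g ->
  forall x y, g y <= exp K * g x.
Proof.
  intros K0 D S pos P x y.
  set (h := fun t => g t * exp (- K * t)).
  assert (dec : forall a b, a <= b -> h b <= h a).
  { intros a b ab. destruct (Rle_lt_or_eq_dec _ _ ab) as [lt|eq]; [|subst; lra].
    destruct (MVT_cor2 h (fun t => (g' t - K * g t) * exp (- K * t)) a b lt) as [c [Hc _]].
    { intros c _. apply is_derive_Reals. apply deriv_h, D. }
    assert (0 < exp (- K * c)) by apply exp_pos.
    specialize (S c).
    assert ((g' c - K * g c) * exp (- K * c) <= 0) by nra. nra. }
  destruct (per_red g P y x) as [t [ht ->]].
  specialize (dec x t ltac:(lra)). unfold h in dec.
  assert (E : forall u, exp (- K * u) * exp (K * u) = 1).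
  { intros u. rewrite <- exp_plus. replace (- K * u + K * u) with 0 by ring. apply exp_0. }
  assert (gt : g t = g t * exp (- K * t) * exp (K * t)).
  { rewrite Rmult_assoc, E; ring. }
  assert (ep : 0 < exp (K * t)) by apply exp_pos.
  assert (g t <= g x * (exp (- K * x) * exp (K * t))).
  { rewrite gt. apply Rle_trans with (g x * exp (- K * x) * exp (K * t)); [nra|].
    right; ring. }
  rewrite <- exp_plus in H.
  assert (exp (- K * x + K * t) <= exp K) by (apply exp_le_mono; nra).
  specialize (pos x). nra.
Qed.

Lemma exRInt_der (f : R -> R) : (forall x, ex_derive f x) -> ex_RInt f 0 1.
Proof.
  intros D. apply (@ex_RInt_continuous R_CompleteNormedModule). intros z _.
  exact (@ex_derive_continuous R_AbsRing R_NormedModule f z (D z)).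
Qed.

Theorem lemma4p4 (G V : R -> R) (theta1 theta2 : R) (f1 f2 : R -> R) :
  is_C1 G -> coercive G -> lipschitz V -> periodic1 V ->
  theta1 < theta2 ->
  is_f_theta G V theta1 f1 -> is_f_theta G V theta2 f2 ->
  forall x : R,
    (theta2 - theta1) * exp (- K1 G f1 f2) <= f2 x - f1 x /\
    f2 x - f1 x <= (theta2 - theta1) * exp (K1 G f1 f2).
Proof.
  intros HG _ _ _ hth [C1 [P1 [I1 [H1 E1]]]] [C2 [P2 [I2 [H2 E2]]]] x.
  assert (cf1 := cont_of_der f1 (proj1 C1)).
  assert (cf2 := cont_of_der f2 (proj1 C2)).
  assert (cG' : forall c, continuity_pt (Derive G) c).
  { intros c. apply continuity_pt_filterlim. apply (proj2 HG c). }
  set (g := fun t => f2 t - f1 t).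
  set (a := H2 - H1).
  set (D := fun t => G (f2 t) - G (f1 t)).
  set (g' := fun t => a - D t).
  assert (Dg : forall t, is_derive g t (g' t)).
  { intros t.
    assert (Hm := is_derive_minus f2 f1 t _ _ (Derive_correct _ _ (proj1 C2 t))
                   (Derive_correct _ _ (proj1 C1 t))).
    replace (g' t) with (minus (Derive f2 t) (Derive f1 t)); [exact Hm|].
    unfold minus, plus, opp; simpl. unfold g', D, a.
    specialize (E1 t); specialize (E2 t). lra. }
  assert (Pg : periodic1 g).
  { intros t; unfold g; now rewrite P1, P2. }
  assert (exg : ex_RInt g 0 1).
  { apply exRInt_der. intros t; eexists; apply Dg. }
  assert (Ig : RInt g 0 1 = theta2 - theta1).
  { assert (E := RInt_minus f2 f1 0 1 (exRInt_der f2 (proj1 C2)) (exRInt_der f1 (proj1 C1))).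
    unfold minus, plus, opp in E; simpl in E. unfold g, Rminus. rewrite E, I1, I2. reflexivity. }
  assert (Iup : forall c, (forall y, g y <= c) -> theta2 - theta1 <= c).
  { intros c Hc. rewrite <- Ig.
    apply Rle_trans with (RInt (fun _ => c) 0 1).
    - apply RInt_le; [lra|try apply ex_RInt_const|try apply ex_RInt_const|]; auto.
    - rewrite RInt_const. unfold scal; simpl; unfold mult; simpl; lra. }
  assert (Ilo : forall c, (forall y, c <= g y) -> c <= theta2 - theta1).
  { intros c Hc. rewrite <- Ig.
    apply Rle_trans with (RInt (fun _ => c) 0 1).
    - rewrite RInt_const. unfold scal; simpl; unfold mult; simpl; lra.
    - apply RInt_le; [lra|try apply ex_RInt_const|try apply ex_RInt_const|]; auto. }
  assert (mvtb : forall lo hi B, (forall p, lo <= p <= hi -> Rabs (Derive G p) <= B) ->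
            forall u v, lo <= u <= hi -> lo <= v <= hi -> Rabs (G v - G u) <= B * Rabs (v - u)).
  { intros lo hi B HB u v hu hv.
    destruct (MVT_gen G u v (Derive G)) as [c [hc Hc]].
    { intros; apply Derive_correct, (proj1 HG). }
    { intros; apply cont_of_der, (proj1 HG). }
    rewrite Hc, Rabs_mult. apply Rmult_le_compat_r; [apply Rabs_pos|].
    apply HB. unfold Rmin, Rmax in hc. destruct (Rle_dec u v); lra. }
  assert (m1 := min01_le f1 cf1 P1). assert (m2 := min01_le f2 cf2 P2).
  assert (M1 := max01_ge f1 cf1 P1). assert (M2 := max01_ge f2 cf2 P2).
  set (lo := Rmin (min01 f1) (min01 f2)). set (hi := Rmax (max01 f1) (max01 f2)).
  assert (inr : forall t, lo <= f1 t <= hi /\ lo <= f2 t <= hi).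
  { intros t; specialize (m1 t); specialize (m2 t); specialize (M1 t); specialize (M2 t).
    assert (lo <= min01 f1) by apply Rmin_l. assert (lo <= min01 f2) by apply Rmin_r.
    assert (max01 f1 <= hi) by apply Rmax_l. assert (max01 f2 <= hi) by apply Rmax_r.
    lra. }
  destruct (abs_bound (Derive G) lo hi) as [B HB].
  { destruct (inr 0); lra. } { exact cG'. }
  assert (DB : forall t, Rabs (D t) <= B * Rabs (g t)).
  { intros t. destruct (inr t) as [i1 i2]. unfold D, g. apply (mvtb lo hi B HB); auto. }
  assert (gpos : forall t, 0 <= g t).
  { intros t0. destruct (Rlt_or_le (g t0) 0) as [neg|]; auto. exfalso.
    assert (allneg : forall y, g y <= 0).
    { intros y. destruct (Rle_or_lt 0 a) as [ha|ha].
      - destruct (per_red g Pg y (t0 - 1)) as [t [ht ->]].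
        left. apply (neg_back g g' B t0 t Dg); [|auto|lra]; auto.
        intros s hs. specialize (DB s). rewrite (Rabs_left (g s)) in DB by auto. unfold g'.
        assert (D s <= Rabs (D s)) by apply Rle_abs. lra.
      - destruct (per_red g Pg y t0) as [t [ht ->]].
        left. apply (neg_fwd g g' B t0 t Dg); [|auto|lra]; auto.
        intros s hs. specialize (DB s). rewrite (Rabs_left (g s)) in DB by auto. unfold g'.
        assert (- D s <= Rabs (D s)) by (rewrite <- Rabs_Ropp; apply Rle_abs). lra. }
    specialize (Iup 0 allneg). lra. }
  assert (lohi : min01 f1 <= max01 f2).
  { specialize (m1 0); specialize (M2 0); specialize (gpos 0); unfold g in gpos; lra. }
  destruct (abs_bound (Derive G) (min01 f1) (max01 f2) lohi cG') as [B2 HB2].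
  assert (HK : forall p, min01 f1 <= p <= max01 f2 -> Rabs (Derive G p) <= K1 G f1 f2).
  { intros p hp. unfold K1. apply (lub_ge _ B2).
    - intros z [q [hq ->]]. apply HB2; auto.
    - exists p; split; auto. }
  set (K := K1 G f1 f2) in *.
  assert (K0 : 0 <= K).
  { apply Rle_trans with (Rabs (Derive G (min01 f1))); [apply Rabs_pos| apply HK; lra]. }
  assert (DK : forall t, Rabs (D t) <= K * g t).
  { intros t. rewrite <- (Rabs_pos_eq (g t)) by apply gpos. unfold D, g.
    specialize (m1 t); specialize (gpos t); specialize (M2 t); unfold g in gpos.
    apply (mvtb _ _ K HK); lra. }
  assert (main : forall u v, g v <= exp K * g u).
  { destruct (Rle_or_lt a 0) as [ha|ha].
    - apply (mono_est g g' K K0 Dg); auto.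
      intros t. specialize (DK t). unfold g'.
      assert (D t <= Rabs (D t)) by apply Rle_abs.
      assert (- D t <= Rabs (D t)) by (rewrite <- Rabs_Ropp; apply Rle_abs). lra.
    - intros u v.
      assert (M := mono_est (fun t => g (- t)) (fun t => - g' (- t)) K K0
                     (fun t => deriv_refl g g' t (Dg (- t)))).
      assert (HM : g (- - v) <= exp K * g (- - u)).
      { apply M.
        - intros t. specialize (DK (- t)). unfold g'.
          assert (D (- t) <= Rabs (D (- t))) by apply Rle_abs.
          assert (- D (- t) <= Rabs (D (- t))) by (rewrite <- Rabs_Ropp; apply Rle_abs). lra.
        - intros t; apply gpos.
        - intros t. simpl. rewrite <- (Pg (- (t + 1))). f_equal. ring. }
      rewrite !Ropp_involutive in HM. exact HM. }
  assert (eK : exp K * exp (- K) = 1).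
  { rewrite <- exp_plus, Rplus_opp_r. apply exp_0. }
  assert (eKp : 0 < exp (- K)) by apply exp_pos.
  assert (eKp' : 0 < exp K) by apply exp_pos.
  change (f2 x - f1 x) with (g x). split.
  - assert (H := Iup (exp K * g x) (fun y => main x y)).
    apply Rmult_le_compat_r with (r := exp (- K)) in H; [|lra].
    replace (exp K * g x * exp (- K)) with (g x * (exp K * exp (- K))) in H by ring.
    rewrite eK in H. lra.
  - assert (H := Ilo (exp (- K) * g x)).
    assert (H' : exp (- K) * g x <= theta2 - theta1).
    { apply H. intros y. specialize (main y x).
      apply Rmult_le_compat_l with (r := exp (- K)) in main; [|lra].
      replace (exp (- K) * (exp K * g y)) with ((exp K * exp (- K)) * g y) in main by ring.
      rewrite eK in main. lra. }
    apply Rmult_le_compat_l with (r := exp K) in H'; [|lra].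
    replace (exp K * (exp (- K) * g x)) with ((exp K * exp (- K)) * g x) in H' by ring.
    rewrite eK in H'. lra.
Qed.
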